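(* Any two equivalent reduced operation sequences have the same profile.
   Context: Operation sequences: $\sigma[a]$ ($a\ge1$) denotes pushing the top $a$ elements of the input stack, as a block with relative order unchanged, onto the top of a working stack; $\tau[b]$ ($b\ge1$) denotes moving the top $b$ elements of the working stack, as a block with relative order unchanged, onto the top of an output stack; $\sigma=\sigma[1]$, $\tau=\tau[1]$. A well-formed operation sequence is a word $\alpha=\alpha_1\cdots\alpha_m$ in these symbols such that in every prefix the total push size is at least the total pop size, with equality for the whole word; its size $n$ is the total push size. Acting on an input stack containing $1,\dots,n$ with $1$ on top, it produces the permutation read from the final output stack top to bottom. Two well-formed sequences are equivalent if they have the same size and produce the same permutation. $\alpha$ is reduced if every consecutive pair $\alpha_i\alpha_{i+1}$ with $\alpha_i$ a push and $\alpha_{i+1}$ a pop equals $\sigma[1]\tau[1]$. The profile of $\alpha$ is the polygonal path through $v_0=(0,0),v_1,\dots,v_m$ where $v_i=v_{i-1}+(a,a)$ if $\alpha_i=\sigma[a]$ and $v_i=v_{i-1}+(b,-b)$ if $\alpha_i=\tau[b]$. *)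

(* Defs.v *)
From mathcomp Require Import all_boot all_order all_algebra.
Set Implicit Arguments. Unset Strict Implicit. Unset Printing Implicit Defensive.
Import Order.TTheory GRing.Theory Num.Theory.

(* An operation: Push a = sigma[a], Pop b = tau[b]. *)
Inductive op := Push of nat | Pop of nat.

Definition push_size (o : op) : nat := if o is Push a then a else 0.
Definition pop_size (o : op) : nat := if o is Pop b then b else 0.
Definition op_pos (o : op) : bool :=
  match o with Push a => 0 < a | Pop b => 0 < b end.

Definition total_push (w : seq op) : nat := sumn (map push_size w).
Definition total_pop (w : seq op) : nat := sumn (map pop_size w).

Definition op_size (w : seq op) : nat := total_push w.

Definition well_formed (w : seq op) : Prop :=
  all op_pos w /\
  (forall k, total_pop (take k w) <= total_push (take k w)) /\
  total_pop w = total_push w.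

(* stacks are lists with the top element first *)
Definition step (st : seq nat * seq nat * seq nat) (o : op)
  : seq nat * seq nat * seq nat :=
  let: (inp, wk, out) := st in
  match o with
  | Push a => (drop a inp, take a inp ++ wk, out)
  | Pop b => (inp, drop b wk, take b wk ++ out)
  end.

(* the permutation produced: the final output stack read from top to bottom,
   starting from input stack 1..n (1 on top), n = size of w *)
Definition produce (w : seq op) : seq nat :=
  (foldl step (iota 1 (op_size w), [::], [::]) w).2.

Definition equivalent (w1 w2 : seq op) : Prop :=
  well_formed w1 /\ well_formed w2 /\
  op_size w1 = op_size w2 /\ produce w1 = produce w2.

Definition reduced (w : seq op) : Prop :=
  forall i a b, (i.+1 < size w)%N ->
    nth (Pop 0) w i = Push a -> nth (Pop 0) w i.+1 = Pop b ->
    a = 1%N /\ b = 1%N.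

Definition op_vec (o : op) : rat * rat :=
  match o with
  | Push a => ((a%:R)%R, (a%:R)%R)
  | Pop b => ((b%:R)%R, (- b%:R)%R)
  end.

Definition vertex (w : seq op) (i : nat) : rat * rat :=
  foldl (fun v o => ((v.1 + (op_vec o).1)%R, (v.2 + (op_vec o).2)%R))
        (0%R, 0%R) (take i w).

Definition in_profile (w : seq op) (p : rat * rat) : Prop :=
  (size w = 0%N /\ p = vertex w 0) \/
  exists i t, (0 < i <= size w)%N /\ (0 <= t <= 1)%R /\
    p = (((vertex w i.-1).1 + t * ((vertex w i).1 - (vertex w i.-1).1))%R,
         ((vertex w i.-1).2 + t * ((vertex w i).2 - (vertex w i.-1).2))%R).

Definition same_profile (w1 w2 : seq op) : Prop :=
  forall p, in_profile w1 p <-> in_profile w2 p.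

(* Main.v *)
Require Import Defs.
From mathcomp Require Import all_boot all_order all_algebra.
From mathcomp Require Import zify ring lra.
Set Implicit Arguments. Unset Strict Implicit. Unset Printing Implicit Defensive.
Import Order.TTheory GRing.Theory Num.Theory.

Definition unitw (o : op) : seq bool :=
  match o with Push a => nseq a true | Pop b => nseq b false end.
Definition uw (w : seq op) := flatten (map unitw w).

Fixpoint G (r : seq nat) (M : nat) : seq bool :=
  if r is x :: r' then nseq (x - M) true ++ false :: G r' (maxn M x) else [::].

Lemma G_cat r1 r2 M : G (r1 ++ r2) M = G r1 M ++ G r2 (foldl maxn M r1).
Proof. by elim: r1 M => //= x r IH M; rewrite IH -catA. Qed.

Lemma G_le r M : all (fun x => x <= M) r -> G r M = nseq (size r) false.
Proof.
elim: r => //= x r IH /andP[hx hr].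
have -> : x - M = 0 by lia.
by rewrite (maxn_idPl hx) IH.
Qed.

Lemma foldl_max_le r M m : all (fun x => x <= m) r -> M <= m -> foldl maxn M r <= m.
Proof. elim: r M => //= x r IH M /andP[hx hr] hM; apply: IH => //; lia. Qed.

Lemma foldl_max_id r M : all (fun x => x <= M) r -> foldl maxn M r = M.
Proof. elim: r => //= x r IH /andP[hx hr]; by rewrite (maxn_idPl hx) IH. Qed.

Lemma tp_rcons (f : op -> nat) p o : sumn (map f (rcons p o)) = sumn (map f p) + f o.
Proof. by rewrite map_rcons sumn_rcons. Qed.

Lemma reduced_mid p a b s : reduced (p ++ Push a :: Pop b :: s) -> a = 1 /\ b = 1.
Proof.
move=> H; apply: (H (size p)).
- by rewrite size_cat /=; lia.
- by rewrite nth_cat ltnn subnn.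
- by rewrite nth_cat ltnNge leqnSn /= subSn // subnn.
Qed.

Lemma all_sub (P : pred nat) (s1 s2 : seq nat) : {subset s1 <= s2} -> all P s2 -> all P s1.
Proof. move=> sub /allP h; apply/allP => x /sub; exact: h. Qed.

Lemma inv w : reduced w -> well_formed w -> forall p s inp wk out, w = p ++ s ->
  foldl step (iota 1 (op_size w), [::], [::]) p = (inp, wk, out) ->
  let m := total_push p in
  [/\ inp = iota m.+1 (op_size w - m), m <= op_size w,
     all (fun x => x <= m) (wk ++ out),
     size wk + total_pop p = m &
     [/\ (forall b, last (Push 0) p = Pop b -> foldl maxn 0 (rev out) = m),
     (last (Push 0) p = Push 1 -> wk = m :: behead wk) &
     uw p = G (rev out) 0 ++ nseq (m - foldl maxn 0 (rev out)) true]].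
Proof.
move=> red [pos [pref tot]].
elim/last_ind => [|p o IH] s inp wk out ew; subst w.
  by case=> <- <- <-; rewrite /= subn0; split.
rewrite foldl_rcons.
case E: (foldl step _ p) => [[inp0 wk0] out0].
have := IH (o :: s) inp0 wk0 out0; rewrite cat_rcons => /(_ erefl); rewrite -cat_rcons => /(_ E).
set m := total_push p.
move=> [hinp hm hall hsz [hmax htop huw]].
have hpref := pref (size (rcons p o)).
rewrite take_size_cat // /total_pop /total_push !tp_rcons in hpref.
have htot : total_push (rcons p o) <= op_size (p ++ o :: s).
  by rewrite /op_size /total_push -cat_rcons map_cat sumn_cat; lia.
have hpos : op_pos o.
  by move: pos; rewrite all_cat all_rcons => /andP[/andP[]].
rewrite /total_push tp_rcons -/(total_push p) -/m in htot *.
rewrite /total_pop tp_rcons -/(total_pop p).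
rewrite /uw map_rcons flatten_rcons -/(uw p) last_rcons.
have hM : foldl maxn 0 (rev out0) <= m.
  apply: foldl_max_le => //; apply: all_sub hall => x; rewrite mem_rev mem_cat => ->; exact: orbT.
rewrite -cat_rcons in htot.
clear IH E pref tot pos.
move: hinp hm htot; set n := op_size _; clearbody n => hinp hm htot.
case: o hpos hpref htot red => [a|b] /= hpos hpref htot red [<- <- <-];
  rewrite -/(total_pop p) in hpref *.
-
  rewrite addn0 in hpref *.
  split.
  + by rewrite hinp drop_iota; congr iota; lia.
  + done.
  + rewrite -catA all_cat hinp take_iota; apply/andP; split.
      apply/allP => x; rewrite mem_iota; lia.
    apply: sub_all hall => x; lia.
  + by rewrite size_cat hinp take_iota size_iota; lia.
  split.
  + by [].
  + case=> ea; subst a; rewrite hinp take_iota.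
    have -> : minn 1 (n - m) = 1 by lia.
    by rewrite /= addn1.
  + by rewrite huw -catA -nseqD; congr (_ ++ nseq _ _); lia.
-
  rewrite addn0 in htot *.
  rewrite -/(total_push p) -/m addn0 in hpref.
  have hb : b <= size wk0 by lia.
  have hallwk : all (fun x => x <= m) wk0 by move: hall; rewrite all_cat => /andP[].
  have hallout : all (fun x => x <= m) out0 by move: hall; rewrite all_cat => /andP[].
  have hallB : all (fun x => x <= m) (rev (take b wk0)).
    by rewrite all_rev; apply: all_sub hallwk => x; apply: mem_take.
  have key : foldl maxn 0 (rev (take b wk0 ++ out0)) = m /\
     G (rev (take b wk0 ++ out0)) 0 = G (rev out0) 0 ++ nseq (m - foldl maxn 0 (rev out0)) true ++ nseq b false.
    rewrite rev_cat G_cat foldl_cat.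
    case/lastP: p @m hinp hm hall hsz hmax htop huw hM hpref htot hb hallwk hallout hallB red
      => [|p' o'] m hinp hm hall hsz hmax htop huw hM hpref htot hb hallwk hallout hallB red.
      move: hpos hpref; rewrite /m /total_push /total_pop /= => ? ?; exfalso; lia.
    clearbody m; clear hsz hpref huw; rewrite last_rcons in hmax htop.
    case: o' red hmax htop => [a'|b'] red hmax htop.
    * have [ea eb] : a' = 1 /\ b = 1.
        by apply: (@reduced_mid p' a' b s); move: red; rewrite -!cats1 -!catA.
      subst a' b; rewrite (htop erefl) /= take0 /= (maxn_idPr hM). by [].
    * rewrite (hmax b' erefl) (foldl_max_id hallB) (G_le hallB) size_rev (size_takel hb) subnn.
      by [].
  case: key => k1 k2.
  split.
  + done.
  + done.
  + apply: all_sub hall => x; rewrite !mem_cat => /orP[/mem_drop->//|/orP[/mem_take->//|->]]; by rewrite orbT.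
  + by rewrite size_drop; lia.
  split.
  + by move=> ? _; exact: k1.
  + by [].
  + by rewrite k1 subnn cats0 k2 huw -catA.
Qed.
Lemma uw_inv w : reduced w -> well_formed w ->
  uw w = G (rev (produce w)) 0 ++ nseq (op_size w - foldl maxn 0 (rev (produce w))) true.
Proof.
move=> red wf.
case E: (foldl step (iota 1 (op_size w), [::], [::]) w) => [[i k] o].
have := inv red wf (esym (cats0 w)) E => /= [[_ _ _ _ [_ _ ->]]].
by rewrite /produce E.
Qed.

Lemma uw_eq w1 w2 : reduced w1 -> reduced w2 -> equivalent w1 w2 -> uw w1 = uw w2.
Proof.
move=> r1 r2 [wf1 [wf2 [es ep]]].
by rewrite (uw_inv r1 wf1) (uw_inv r2 wf2) es ep.
Qed.
Local Open Scope ring_scope.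

Definition vstep (v : rat * rat) (o : op) : rat * rat :=
  ((v.1 + (op_vec o).1)%R, (v.2 + (op_vec o).2)%R).
Definition vfrom (v : rat * rat) (w : seq op) (i : nat) := foldl vstep v (take i w).
Definition seg (a b p : rat * rat) : Prop :=
  exists t : rat, (0 <= t <= 1) /\ p = (a.1 + t * (b.1 - a.1), a.2 + t * (b.2 - a.2)).
Definition inprof (v : rat * rat) (w : seq op) (p : rat * rat) : Prop :=
  (size w = 0%N /\ p = vfrom v w 0) \/
  exists i t, (0 < i <= size w)%N /\ (0 <= t <= 1) /\
    p = ((vfrom v w i.-1).1 + t * ((vfrom v w i).1 - (vfrom v w i.-1).1),
         (vfrom v w i.-1).2 + t * ((vfrom v w i).2 - (vfrom v w i.-1).2)).

Lemma in_profileE w p : in_profile w p <-> inprof (0, 0) w p.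
Proof. by []. Qed.

Fixpoint pts (v : rat * rat) (w : seq op) (p : rat * rat) : Prop :=
  match w with
  | [::] => p = v
  | o :: w' => seg v (vstep v o) p \/ pts (vstep v o) w' p
  end.

Lemma inprof_pts v w p : inprof v w p <-> pts v w p.
Proof.
elim: w v => [|o w IH] v /=.
  split; first by case=> [[_ ->]//|[i [t [hi _]]]]; exfalso; move: hi; rewrite /=; lia.
  by move=> ->; left.
rewrite -IH; split.
- case=> [[//]|[[|[|j]] [t [hi [ht ->]]]]]; first by lia.
  + by left; exists t; split => //; rewrite /vfrom /= take0.
  + by right; rewrite /inprof; right; exists j.+1, t; split => //.
- case=> [[t [ht ->]]|].
    rewrite /inprof; right; exists 1%N, t; split => //; split => //.
    by rewrite /vfrom /= take0.
  rewrite /inprof; case=> [[/size0nil hs ->]|[[|i] [t [hi [ht ->]]]]].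
    right; exists 1%N, 1; split => //; split => //.
    rewrite /vfrom take0 hs /=.
    by congr pair; ring.
    by exfalso; move: hi; rewrite /=; lia.
  by right; exists i.+2, t; split => //.
Qed.

Lemma seg_split (v : rat * rat) (x y : rat) (k : nat) p :
  seg v (v.1 + (k.+1)%:R * x, v.2 + (k.+1)%:R * y) p <->
  seg v (v.1 + x, v.2 + y) p \/
  seg (v.1 + x, v.2 + y) (v.1 + x + k%:R * x, v.2 + y + k%:R * y) p.
Proof.
have hK1 : 0 < (k.+1)%:R :> rat by rewrite ltr0n.
have hK0 : 0 <= k%:R :> rat by rewrite ler0n.
have eK : (k.+1)%:R = k%:R + 1 :> rat by rewrite -natr1.
have nz : 1 + k%:R != 0 :> rat by rewrite addrC -eK lt0r_neq0.
split.
- case=> t [/andP[t0 t1] ->] /=.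
  have [le1|gt1] := lerP (t * (k.+1)%:R) 1.
    left; exists (t * (k.+1)%:R); split.
      by apply/andP; split => //; apply: mulr_ge0 => //; exact: ltW.
    by congr pair => /=; ring.
  have kpos : 0 < k%:R :> rat.
    rewrite eK in gt1; nra.
  right; exists ((t * (k.+1)%:R - 1) / k%:R); split.
    apply/andP; split.
      by apply: divr_ge0; [rewrite eK in gt1 *; lra | exact: ltW].
    rewrite ler_pdivrMr // mul1r; rewrite eK in gt1 *; nra.
  by congr pair => /=; field; rewrite lt0r_neq0.
- case=> [[t [/andP[t0 t1] ->]]|[t [/andP[t0 t1] ->]]] /=.
    exists (t / (k.+1)%:R); split.
      apply/andP; split; first by apply: divr_ge0 => //; exact: ltW.
      by rewrite ler_pdivrMr // mul1r eK; lra.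
    by congr pair => /=; field.
  exists ((1 + t * k%:R) / (k.+1)%:R); split.
    apply/andP; split; first by apply: divr_ge0; [nra | exact: ltW].
    by rewrite ler_pdivrMr // mul1r eK; nra.
  by congr pair => /=; field.
Qed.

Definition toOps (u : seq bool) := map (fun b : bool => if b then Push 1 else Pop 1) u.
Definition mk (k : bool) (a : nat) := if k then Push a else Pop a.

Lemma pts_cons v o s p : pts v (o :: s) p <-> seg v (vstep v o) p \/ pts (vstep v o) s p.
Proof. by []. Qed.

Lemma pts_expand (k : bool) v a s p :
  pts v (mk k a.+1 :: s) p <-> pts v (nseq a.+1 (mk k 1) ++ s) p.
Proof.
elim: a v => [|a IH] v; first by [].
have -> : nseq a.+2 (mk k 1) ++ s = mk k 1 :: (nseq a.+1 (mk k 1) ++ s) by [].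
rewrite [pts v (mk k 1 :: _) p]pts_cons -IH !pts_cons.
set y : rat := if k then 1 else -1.
have e1 : vstep (vstep v (mk k 1)) (mk k a.+1) = vstep v (mk k a.+2).
  by clear IH; case: k @y; rewrite /vstep /=; congr pair; ring.
have ea : vstep v (mk k a.+2) = (v.1 + (a.+2)%:R * 1, v.2 + (a.+2)%:R * y).
  by clear IH; case: k @y e1; rewrite /vstep /= => _; congr pair; ring.
have eb : vstep v (mk k 1) = (v.1 + 1, v.2 + y).
  by clear IH; case: k @y e1 ea; rewrite /vstep /= => _ _; congr pair; ring.
have ec : vstep (vstep v (mk k 1)) (mk k a.+1) = (v.1 + 1 + (a.+1)%:R * 1, v.2 + y + (a.+1)%:R * y).
  by clear IH; case: k @y e1 ea eb; rewrite /vstep /= => _ _ _; congr pair; ring.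
have hs := seg_split v 1 y a.+1 p.
rewrite -ea -ec -eb in hs.
rewrite e1 in hs *.
tauto.
Qed.

Lemma pts_uw v w p : all op_pos w -> (pts v w p <-> pts v (toOps (uw w)) p).
Proof.
elim: w v => [|o w IH] v //= /andP[ho hw].
rewrite /toOps map_cat -/(toOps (uw w)).
have step : pts v (o :: w) p <-> pts v (o :: toOps (uw w)) p.
  by have := IH (vstep v o) hw; rewrite /=; tauto.
rewrite [pts v (o :: w) p]/= in step; rewrite step.
case: o ho step => [[|a]|[|a]] //= _ _ ; rewrite map_nseq.
- exact: (pts_expand true).
- exact: (pts_expand false).
Qed.

Theorem mainTheorem9 (w1 w2 : seq op) :
  reduced w1 -> reduced w2 -> equivalent w1 w2 -> same_profile w1 w2.
Proof.
move=> r1 r2 eq p.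
have e := uw_eq r1 r2 eq.
case: eq => [[pos1 _] [[pos2 _] _]].
rewrite !in_profileE !inprof_pts (pts_uw _ _ pos1) (pts_uw _ _ pos2) e.
by [].
Qed.
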